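(* Let $X$ be a T$_D$ space. Then the McKinsey scheme $\mathrm{M}:\ \Box\Diamond\varphi\to\Diamond\Box\varphi$ is $d$-valid in $X$ if and only if $X$ is crowded and openly irresolvable. Consequently, if $X$ is T$_D$ and crowded, then the following are equivalent: $\mathrm{M}$ is $d$-valid in $X$; $X$ is openly irresolvable; $\mathrm{M}$ is $C$-valid in $X$.
   Context: Topological models on a space $X$ are valuations of propositional variables by subsets of $X$, with Boolean connectives interpreted as set operations and $\Box=\neg\Diamond\neg$. In $d$-semantics, $\Diamond\varphi$ is interpreted as the derived set $\mathrm{d}_X$ (set of limit points: $x$ such that every $O-\{x\}$, $O$ an open neighbourhood of $x$, meets the set) of the truth set of $\varphi$; in $C$-semantics, $\Diamond\varphi$ is interpreted as the closure of the truth set of $\varphi$ (so $\Box$ is interior). A scheme is $d$-valid (resp. $C$-valid) in $X$ if all its instances are true at all points of all models on $X$ under $d$-semantics (resp. $C$-semantics). $X$ is T$_D$ if $\mathrm{d}_X\{x\}$ is closed for all $x$; crowded if it has no isolated points. A space is irresolvable if it has no two disjoint non-empty dense subsets; $X$ is openly irresolvable if every non-empty open subspace is irresolvable. *)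

(* Defs.v *)
From HB Require Import structures.
From mathcomp Require Import all_boot all_order.
From mathcomp Require Import all_classical topology.
Set Implicit Arguments. Unset Strict Implicit. Unset Printing Implicit Defensive.
Local Open Scope classical_set_scope.

Inductive form : Type :=
| Var : nat -> form
| Bot : form
| Neg : form -> form
| And : form -> form -> form
| Or  : form -> form -> form
| Imp : form -> form -> form
| Dia : form -> form.

Definition Box (f : form) : form := Neg (Dia (Neg f)).

Definition McKinsey (f : form) : form := Imp (Box (Dia f)) (Dia (Box f)).

Fixpoint truth (T : Type) (dia : set T -> set T) (v : nat -> set T)
    (f : form) : set T :=
  match f with
  | Var n => v n
  | Bot => set0
  | Neg g => ~` truth dia v g
  | And g h => truth dia v g `&` truth dia v h
  | Or g h => truth dia v g `|` truth dia v h
  | Imp g h => ~` truth dia v g `|` truth dia v h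
  | Dia g => dia (truth dia v g)
  end.

Definition derived (T : topologicalType) (A : set T) : set T := limit_point A.

Definition d_valid_M (T : topologicalType) : Prop :=
  forall (f : form) (v : nat -> set T) (x : T),
    truth (@derived T) v (McKinsey f) x.

Definition C_valid_M (T : topologicalType) : Prop :=
  forall (f : form) (v : nat -> set T) (x : T),
    truth (@closure T) v (McKinsey f) x.

Definition T_D (T : topologicalType) : Prop :=
  forall x : T, closed (derived [set x]).

Definition crowded (T : topologicalType) : Prop :=
  forall x : T, ~ open [set x].

(* A is a dense subset of the subspace U (subspace topology: opens are O `&` U) *)
Definition dense_in (T : topologicalType) (U A : set T) : Prop :=
  A `<=` U /\
  forall O : set T, open O -> (O `&` U) !=set0 -> (O `&` A) !=set0.

Definition irresolvable_in (T : topologicalType) (U : set T) : Prop :=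
  ~ exists A B : set T,
      [/\ dense_in U A, dense_in U B, A !=set0, B !=set0 & A `&` B = set0].

Definition openly_irresolvable (T : topologicalType) : Prop :=
  forall U : set T, open U -> U !=set0 -> irresolvable_in U.

(* Main.v *)
Require Import Defs.
From mathcomp Require Import all_boot all_order all_classical topology.
Set Implicit Arguments. Unset Strict Implicit. Unset Printing Implicit Defensive.
Local Open Scope classical_set_scope.

Section Helpers.
Context {X : topologicalType}.

Lemma nbhs_op (p : X) (O : set X) : open O -> O p -> nbhs p O.
Proof. by move=> oO Op; apply: open_nbhs_nbhs. Qed.

Lemma nbhs_ex (p : X) N : nbhs p N -> exists O, [/\ open O, O p & O `<=` N].
Proof. by rewrite nbhsE => -[B [oB Bp] BN]; exists B. Qed.

Lemma crowd_pt (cr : crowded X) (W : set X) (x : X) :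
  open W -> W !=set0 -> exists z, W z /\ z <> x.
Proof.
move=> oW [w Ww].
have [[z [Wz zx]]|no] := pselect (exists z, W z /\ z <> x); first by exists z.
exfalso; apply: (cr x).
suff -> : [set x] = W by [].
apply/seteqP; split => [y -> | y Wy].
  by apply: contrapT => nW; apply: no; exists w; split => // wx; apply: nW; rewrite -wx.
by apply: contrapT => yx; apply: no; exists y.
Qed.

Lemma iso_nd (x : X) (E : set X) : open [set x] -> ~ derived E x.
Proof.
move=> ox /(_ [set x] (nbhs_op ox erefl)) [y [/eqP yx _ yx']]; exact: yx yx'.
Qed.

Lemma star (hTD : T_D X) (cr : crowded X) (y : X) N :
  open N -> N y -> exists O, [/\ open O, O !=set0, O `<=` N & ~ O y].
Proof.
move=> oN Ny.
exists (N `&` ~` closure [set y]); split.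
- by apply: openI => //; rewrite openC; exact: closed_closure.
- have oV : open (N `&` ~` derived [set y]).
    by apply: openI => //; rewrite openC; exact: hTD.
  have ndy : ~ derived [set y] y.
    by move=> /(_ setT filterT) [w [/eqP wy wy' _]]; exact: wy wy'.
  have [z [[Nz ndz] zy]] := crowd_pt cr y oV (ex_intro _ y (conj Ny ndy)).
  exists z; split => // cz; apply: ndz => U /cz [w [wy Uw]].
  exists w; split => //; apply/eqP => wz; apply: zy; rewrite -wz; exact: wy.
- by move=> ? [].
- by move=> [_]; apply; exact: subset_closure.
Qed.

Lemma dense_key (hOI : openly_irresolvable X) (U A : set X) :
  open U -> U !=set0 ->
  (forall O, open O -> (O `&` U) !=set0 -> (O `&` U `&` A) !=set0) ->
  exists W, [/\ open W, W !=set0 & W `<=` U `&` A].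
Proof.
move=> oU U0 hd; apply: contrapT => no.
have d1 : dense_in U (U `&` A).
  split; first by move=> ? [].
  move=> O oO OU; have [z [[Oz Uz] Az]] := hd O oO OU; by exists z.
have d2 : dense_in U (U `&` ~` A).
  split; first by move=> ? [].
  move=> O oO [z [Oz Uz]]; apply: contrapT => none; apply: no.
  exists (O `&` U); split; first exact: openI.
    by exists z.
  move=> w [Ow Uw]; split => //; apply: contrapT => nA; apply: none; exists w.
  by split => //; split.
apply: (hOI U oU U0); exists (U `&` A), (U `&` ~` A); split => //.
- have [z [_ Hz]] := d1.2 setT openT (ex_intro _ (projT1 (cid U0)) (conj I (projT2 (cid U0)))).
  by exists z.
- have [z [_ Hz]] := d2.2 setT openT (ex_intro _ (projT1 (cid U0)) (conj I (projT2 (cid U0)))).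
  by exists z.
- by apply/seteqP; split => // z [[_ ?] [_ ?]].
Qed.

Lemma dM_crowded : d_valid_M X -> crowded X.
Proof.
move=> hM x ox; have := hM (Var 0) (fun _ => set0) x; rewrite /=.
case.
  by move=> /contrapT; apply: iso_nd.
by apply: iso_nd.
Qed.

Lemma dense_derived (hTD : T_D X) (cr : crowded X) (U A : set X) :
  open U -> dense_in U A -> U `<=` derived A.
Proof.
move=> oU [AU hA] y Uy N /nbhs_ex [N' [oN' N'y N'N]].
have [O [oO [o Oo] ON ny]] := star hTD cr (openI oN' oU) (conj N'y Uy).
have [a [Oa Aa]] := hA O oO (ex_intro _ o (conj Oo (ON o Oo).2)).
exists a; split => //; last exact/N'N/(ON a Oa).1.
by apply/eqP => ay; apply: ny; rewrite -ay.
Qed.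

Lemma dM_OI (hTD : T_D X) : d_valid_M X -> openly_irresolvable X.
Proof.
move=> hM U oU U0 [A [B [dA dB A0 B0 AB]]].
have cr := dM_crowded hM.
have UdA := dense_derived hTD cr oU dA.
have UdB := dense_derived hTD cr oU dB.
have UdnA : U `<=` derived (~` A).
  move=> y Uy N nN; have [w [wy Bw Nw]] := UdB y Uy N nN.
  exists w; split => // Aw.
  by have : (A `&` B) w by []; rewrite AB.
have [x Ux] := U0.
have := hM (Var 0) (fun _ => A) x; rewrite /=; case.
  move=> /contrapT /(_ U (nbhs_op oU Ux)) [y [_ ndy Uy]]; exact: ndy (UdA y Uy).
move=> /(_ U (nbhs_op oU Ux)) [y [_ ndy Uy]]; exact: ndy (UdnA y Uy).
Qed.

Lemma OI_dM (hOI : openly_irresolvable X) (cr : crowded X) : d_valid_M X.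
Proof.
move=> f v x; rewrite /=.
set P := truth _ v f.
have [h|h] := pselect (derived (~` derived P) x).
  by left => k; exact: k h.
right.
have [U [nU hU]] : exists U, nbhs x U /\ forall y, y != x -> U y -> derived P y.
  apply: contrapT => nn; apply: h => U nU; apply: contrapT => ne; apply: nn.
  exists U; split => // y yx Uy; apply: contrapT => nd; apply: ne; exists y; by split.
move=> V nV.
have [U' [oU' U'x U'UV]] := nbhs_ex (filterI nU nV).
have [W [oW W0 WP]] : exists W, [/\ open W, W !=set0 & W `<=` U' `&` P].
  apply: dense_key => //; first by exists x.
  move=> O oO OU.
  have [z [[Oz U'z] zx]] := crowd_pt cr x (openI oO oU') OU.
  have dz : derived P z by apply: hU; [apply/eqP | exact: (U'UV z U'z).1].
  have [p [_ Pp [Op U'p]]] := dz _ (nbhs_op (openI oO oU') (conj Oz U'z)).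
  by exists p.
have [w [Ww wx]] := crowd_pt cr x oW W0.
exists w; split.
- exact/eqP.
- move=> /(_ W (nbhs_op oW Ww)) [y [_ nPy Wy]]; exact: nPy (WP y Wy).2.
- exact: (U'UV w (WP w Ww).1).2.
Qed.

Lemma OI_CM (hOI : openly_irresolvable X) : C_valid_M X.
Proof.
move=> f v x; rewrite /=.
set P := truth _ v f.
have [h|h] := pselect (closure (~` closure P) x).
  by left => k; exact: k h.
right.
set U := ~` closure (~` closure P).
have oU : open U by rewrite openC; exact: closed_closure.
have UP : U `<=` closure P.
  move=> z Uz; apply: contrapT => nz; apply: Uz; exact: subset_closure.
move=> B nB.
have [B' [oB' B'x B'B]] := nbhs_ex nB.
have [W [oW [w Ww] WP]] : exists W, [/\ open W, W !=set0 & W `<=` (U `&` B') `&` P].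
  apply: dense_key => //; first exact: openI.
    by exists x.
  move=> O oO [z [Oz [Uz B'z]]].
  have [p [Pp [Op U'p]]] := UP z Uz _ (nbhs_op (openI oO (openI oU oB')) (conj Oz (conj Uz B'z))).
  by exists p.
exists w; split; last exact: B'B (WP w Ww).1.2.
move=> /(_ W (nbhs_op oW Ww)) [y [nPy Wy]]; exact: nPy (WP y Wy).2.
Qed.

Lemma CM_OI : C_valid_M X -> openly_irresolvable X.
Proof.
move=> hM U oU U0 [A [B [[AU hA] [BU hB] A0 B0 AB]]].
have UcA : U `<=` closure A.
  move=> z Uz N /nbhs_ex [N' [oN' N'z N'N]].
  have [a [[N'a Ua] Aa]] := hA _ (openI oN' oU) (ex_intro _ z (conj (conj N'z Uz) Uz)).
  by exists a; split => //; exact: N'N.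
have [x Ux] := U0.
have := hM (Var 0) (fun _ => A) x; rewrite /=; case.
  move=> /contrapT /(_ U (nbhs_op oU Ux)) [y [ncy Uy]]; exact: ncy (UcA y Uy).
move=> /(_ U (nbhs_op oU Ux)) [z [ncz Uz]].
apply: ncz => N /nbhs_ex [N' [oN' N'z N'N]].
have [b [[N'b Ub] Bb]] := hB _ (openI oN' oU) (ex_intro _ z (conj (conj N'z Uz) Uz)).
exists b; split; last exact: N'N.
by move=> Ab; have : (A `&` B) b by []; rewrite AB.
Qed.

End Helpers.

Theorem corollary1 (X : topologicalType) (hTD : T_D X) :
  (d_valid_M X <-> crowded X /\ openly_irresolvable X) /\
  (crowded X ->
     (d_valid_M X <-> openly_irresolvable X) /\
     (openly_irresolvable X <-> C_valid_M X)).
Proof.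
split.
  split; first by move=> h; split; [exact: dM_crowded | exact: dM_OI].
  by case=> cr oi; exact: OI_dM.
move=> cr; split; split.
- exact: dM_OI.
- by move=> oi; exact: OI_dM.
- exact: OI_CM.
- exact: CM_OI.
Qed.
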